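(* Let $M$ be a finite-dimensional left $\mathsf{VBr}_{r,t}(\omega)$-module, decomposed as $M=\bigoplus_{\mathbf a\in\mathrm{Seq}_{r,t},\,\mathbf i\in\mathbb C^{r+t}}1_{\mathbf a}M_{\mathbf i}$. Then for all $k\in\{1,\dots,r+t-1\}$, $\mathbf a\in\mathrm{Seq}_{r,t}$ and $\mathbf i\in\mathbb C^{r+t}$, $$s_k1_{\mathbf a}M_{\mathbf i}\subseteq 1_{\mathbf a}M_{\mathbf i}+1_{\mathbf a}M_{\mathsf s_k\mathbf i}.$$
   Context: $\mathrm{Seq}_{r,t}$: sequences $\mathbf a\in\{\wedge,\vee\}^{r+t}$ with exactly $r$ entries $\wedge$; $J=\{1,\dots,r+t-1\}$; $\mathsf s_k$ swaps entries $k,k+1$ of a sequence (also of $\mathbf i\in\mathbb C^{r+t}$). $\mathrm{Br}_{r,t}(\gamma)$: basis oriented Brauer diagrams $\mathbf a\to\mathbf b$ (perfect matchings between bottom row labelled $\mathbf a$ and top row labelled $\mathbf b$; bottom-to-top strands join equal labels, strands within a row join different labels), product by stacking (second factor below), $0$ if labels mismatch, loops replaced by $\gamma$. $1_{\mathbf a}$ identity; for $k\in J$: if $a_k=a_{k+1}$, $s_k1_{\mathbf a}$ crosses strands $k,k+1$ ($\mathbf a\to\mathbf a$); if $a_k\neq a_{k+1}$, $\hat s_k1_{\mathbf a}$ crossing $\mathbf a\to\mathsf s_k\mathbf a$, $e_k1_{\mathbf a}$ cap at bottom $k,k+1$ and cup at top $k,k+1$ ($\mathbf a\to\mathbf a$),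 $\hat e_k1_{\mathbf a}$ same shape $\mathbf a\to\mathsf s_k\mathbf a$; these are $0$ when the condition fails; $s_k=\sum_{\mathbf a}s_k1_{\mathbf a}$ etc. For $\omega=(\omega_j)_{j\ge0}\subset\mathbb C$, $\mathsf{VBr}_{r,t}(\omega)$ is the quotient of the free product $\mathrm{Br}_{r,t}(\omega_0)*\mathbb C[y_1,\dots,y_{r+t}]$ by: $y_i$ commutes with all $1_{\mathbf a}$, and with $s_k,\hat s_k,e_k,\hat e_k$ when $i\notin\{k,k+1\}$; $e_1y_1^je_11_{\mathbf a}=\omega_je_11_{\mathbf a}$ for $j\ge0$ and $(a_1,a_2)=(\wedge,\vee)$; for $a_k=a_{k+1}$: $s_ky_k1_{\mathbf a}-y_{k+1}s_k1_{\mathbf a}=-1_{\mathbf a}$, $s_ky_{k+1}1_{\mathbf a}-y_ks_k1_{\mathbf a}=1_{\mathbf a}$; $\hat s_ky_k-y_{k+1}\hat s_k=\hat e_k$, $\hat s_ky_{k+1}-y_k\hat s_k=-\hat e_k$; $e_k(y_k+y_{k+1})=(y_k+y_{k+1})e_k=\hat e_k(y_k+y_{k+1})=(y_k+y_{k+1})\hat e_k=0$. For a finite-dimensional module $M$: $1_{\mathbf a}M_{\mathbf i}=\{v\in1_{\mathbf a}M:(y_k-\mathrm i_k)^Nv=0\ \forall k, \text{ for } N\gg0\}$. *)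

(* Defs.v *)
From mathcomp Require Import all_boot all_order all_algebra all_fingroup.
From mathcomp Require Import complex.
From mathcomp Require Import Rstruct.

Set Implicit Arguments.
Unset Strict Implicit.
Unset Printing Implicit Defensive.

Import GRing.Theory.
Local Open Scope ring_scope.

Definition C : numClosedFieldType := (Rdefinitions.R)[i].

Section VBr.
Variable n : nat.  (* n = r + t; positions 1..n are the ordinals 'I_n (0-based) *)

(** Sequences in {wedge, vee}^n : wedge = true, vee = false. *)
Definition lseq := {ffun 'I_n -> bool}.
Definition is_Seq (r : nat) (a : lseq) : bool := #|[set j | a j]| == r.

(** s_k acting on sequences / on vectors i in C^n; k' is the position k+1. *)
Definition sk_seq (k k' : 'I_n) (a : lseq) : lseq := [ffun j => a (tperm k k' j)].
Definition sk_vec (k k' : 'I_n) (i : 'I_n -> C) : 'I_n -> C := fun j => i (tperm k k' j).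

(** Points of a diagram: inl j = bottom row position j, inr j = top row. *)
Definition pt := ('I_n + 'I_n)%type.
Definition diagram := {ffun pt -> pt}.

Definition is_top (x : pt) : bool := if x is inr _ then true else false.
Definition lab (a b : lseq) (x : pt) : bool :=
  match x with inl j => a j | inr j => b j end.

(** D is an oriented Brauer diagram a -> b (bottom labelled a, top labelled b):
    a fixed-point-free involution (perfect matching) such that strands
    between the rows join equal labels and strands within a row join
    different labels. *)
Definition is_diagram (a b : lseq) (D : diagram) : bool :=
  [forall x, [&& D (D x) == x, D x != x &
     (if is_top x == is_top (D x) then lab a b x != lab a b (D x)
      else lab a b x == lab a b (D x))]].

(** Stacking: D1 on top of D2 (D2 : a -> b, D1 : b -> c).
    Points of the stacked picture: inl (inl j) bottom of D2, inl (inr j)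
    middle row, inr j top of D1. *)
Definition pt3 := (('I_n + 'I_n) + 'I_n)%type.
Definition emb_low (x : pt) : pt3 :=
  match x with inl j => inl (inl j) | inr j => inl (inr j) end.
Definition emb_up (x : pt) : pt3 :=
  match x with inl j => inl (inr j) | inr j => inr j end.
Definition emb_out (x : pt) : pt3 :=
  match x with inl j => inl (inl j) | inr j => inr j end.
Definition is_middle (x : pt3) : bool :=
  match x with inl (inr _) => true | _ => false end.

Definition stack_edge (D1 D2 : diagram) : rel pt3 :=
  fun x y => [exists p, (x == emb_low p) && (y == emb_low (D2 p))]
          || [exists p, (x == emb_up p) && (y == emb_up (D1 p))].

Definition comp_diag (D1 D2 : diagram) : diagram :=
  [ffun x => odflt x [pick y | (y != x) &&
       connect (stack_edge D1 D2) (emb_out x) (emb_out y)]].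

Definition loop_pts (D1 D2 : diagram) : {set pt3} :=
  [set x | is_middle x &&
     [forall p, ~~ connect (stack_edge D1 D2) x (emb_out p)]].
Definition nloops (D1 D2 : diagram) : nat :=
  #|[set [set y | connect (stack_edge D1 D2) x y] | x in loop_pts D1 D2]|.

Definition id_diag : diagram :=
  [ffun x => match x with inl j => inr j | inr j => inl j end].
(** crossing of strands k, k+1 (shape of s_k 1_a and \hat s_k 1_a) *)
Definition swap_diag (k k' : 'I_n) : diagram :=
  [ffun x => match x with
             | inl j => inr (tperm k k' j) | inr j => inl (tperm k k' j) end].
(** cap at bottom k,k+1 and cup at top k,k+1, vertical strands elsewhere
    (shape of e_k 1_a and \hat e_k 1_a) *)
Definition e_diag (k k' : 'I_n) : diagram :=
  [ffun x => match x with
             | inl j => if (j == k) || (j == k') then inl (tperm k k' j) else inr j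
             | inr j => if (j == k) || (j == k') then inr (tperm k k' j) else inl j
             end].

End VBr.

(** A left VBr_{r,t}(omega)-module of finite dimension d, realised on the
    column vectors 'cV[C]_d.  Since Br_{r,t}(omega_0) has the oriented
    Brauer diagrams as a basis, its (unital) action is given by one
    endomorphism [rho a b D] per diagram D : a -> b, multiplying as the
    diagrams do; the C[y_1..y_n] action is given by commuting
    endomorphisms [Y j]; a module over the free product is a pair of such
    actions (sharing the unit), and the quotient relations are imposed. *)
Section Module.
Variables (r t : nat) (omega : nat -> C) (d : nat).
Local Notation n := (r + t).
Local Notation Mat := 'M[C]_d.

Definition one_a (rho : lseq n -> lseq n -> diagram n -> Mat) (a : lseq n) : Mat :=
  rho a a (id_diag n).
(** s_k 1_a, \hat s_k 1_a, e_k 1_a, \hat e_k 1_a (0 when the condition fails) *)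
Definition s1 rho (k k' : 'I_n) (a : lseq n) : Mat :=
  if a k == a k' then rho a a (swap_diag k k') else 0.
Definition hs1 rho (k k' : 'I_n) (a : lseq n) : Mat :=
  if a k != a k' then rho a (sk_seq k k' a) (swap_diag k k') else 0.
Definition e1 rho (k k' : 'I_n) (a : lseq n) : Mat :=
  if a k != a k' then rho a a (e_diag k k') else 0.
Definition he1 rho (k k' : 'I_n) (a : lseq n) : Mat :=
  if a k != a k' then rho a (sk_seq k k' a) (e_diag k k') else 0.
Definition s_ rho k k' : Mat := \sum_(a | is_Seq r a) s1 rho k k' a.
Definition hs_ rho k k' : Mat := \sum_(a | is_Seq r a) hs1 rho k k' a.
Definition e_ rho k k' : Mat := \sum_(a | is_Seq r a) e1 rho k k' a.
Definition he_ rho k k' : Mat := \sum_(a | is_Seq r a) he1 rho k k' a.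

Record VBr_module := {
  rho : lseq n -> lseq n -> diagram n -> Mat;
  Y : 'I_n -> Mat;
  rho_mul : forall (a b c : lseq n) (D1 D2 : diagram n),
    is_Seq r a -> is_Seq r b -> is_Seq r c ->
    is_diagram a b D2 -> is_diagram b c D1 ->
    rho b c D1 *m rho a b D2 = omega 0 ^+ nloops D1 D2 *: rho a c (comp_diag D1 D2);
  rho_mul0 : forall (a b b' c : lseq n) (D1 D2 : diagram n),
    is_Seq r a -> is_Seq r b -> is_Seq r b' -> is_Seq r c ->
    is_diagram a b D2 -> is_diagram b' c D1 -> b != b' ->
    rho b' c D1 *m rho a b D2 = 0;
  rho_unit : \sum_(a | is_Seq r a) one_a rho a = 1%:M;
  Y_comm : forall j l, Y j *m Y l = Y l *m Y j;
  Y_one : forall j a, is_Seq r a -> Y j *m one_a rho a = one_a rho a *m Y j;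
  Y_far : forall (k k' j : 'I_n), val k' = (val k).+1 -> j != k -> j != k' ->
    [/\ Y j *m s_ rho k k' = s_ rho k k' *m Y j,
        Y j *m hs_ rho k k' = hs_ rho k k' *m Y j,
        Y j *m e_ rho k k' = e_ rho k k' *m Y j &
        Y j *m he_ rho k k' = he_ rho k k' *m Y j];
  Y_e1 : forall (k0 k1 : 'I_n), val k0 = 0%N -> val k1 = 1%N ->
    forall a, is_Seq r a -> a k0 = true -> a k1 = false ->
    forall j : nat,
      e_ rho k0 k1 *m Y k0 ^+ j *m e_ rho k0 k1 *m one_a rho a
      = omega j *: (e_ rho k0 k1 *m one_a rho a);
  Y_s : forall (k k' : 'I_n), val k' = (val k).+1 ->
    forall a, is_Seq r a -> a k = a k' ->
      s_ rho k k' *m Y k *m one_a rho a - Y k' *m s_ rho k k' *m one_a rho a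
        = - one_a rho a /\
      s_ rho k k' *m Y k' *m one_a rho a - Y k *m s_ rho k k' *m one_a rho a
        = one_a rho a;
  Y_hs : forall (k k' : 'I_n), val k' = (val k).+1 ->
    hs_ rho k k' *m Y k - Y k' *m hs_ rho k k' = he_ rho k k' /\
    hs_ rho k k' *m Y k' - Y k *m hs_ rho k k' = - he_ rho k k';
  Y_e : forall (k k' : 'I_n), val k' = (val k).+1 ->
    [/\ e_ rho k k' *m (Y k + Y k') = 0, (Y k + Y k') *m e_ rho k k' = 0,
        he_ rho k k' *m (Y k + Y k') = 0 & (Y k + Y k') *m he_ rho k k' = 0]
}.

(** v lies in 1_a M_i : v in 1_a M and (y_j - i_j)^N v = 0 for all j, N >> 0 *)
Definition in_wt (M : VBr_module) (a : lseq n) (i : 'I_n -> C) (v : 'cV[C]_d) : Prop :=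
  (exists w, v = one_a (rho M) a *m w) /\
  (exists N : nat, forall j : 'I_n, (Y M j - (i j)%:M) ^+ N *m v = 0).

End Module.

(* Main.v *)
From HB Require Import structures.
Require Import Defs.
From mathcomp Require Import all_boot all_order all_algebra all_fingroup ring.
From mathcomp Require Import complex Rstruct.
Set Implicit Arguments. Unset Strict Implicit. Unset Printing Implicit Defensive.
Import GRing.Theory.
Local Open Scope ring_scope.

Section Nil.
Variable n' : nat.
Local Notation d := n'.+1.
Implicit Types (X W B : 'M[C]_d) (z : 'cV[C]_d).

Definition nil X z := exists N, X ^+ N *m z = 0.

Lemma powmulmx X N z : X ^+ N.+1 *m z = X ^+ N *m (X *m z).
Proof. by rewrite exprSr -mulmxE mulmxA. Qed.

Lemma nil_mono X z N N' : X ^+ N *m z = 0 -> (N <= N')%N -> X ^+ N' *m z = 0.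
Proof. by move=> h le; rewrite -(subnK le) exprD -mulmxE -mulmxA h mulmx0. Qed.

Lemma nil_comm X B z : GRing.comm X B -> nil X z -> nil X (B *m z).
Proof.
move=> c [N h]; exists N.
have c' : GRing.comm (X ^+ N) B by apply/commr_sym/commrX/commr_sym.
by rewrite mulmxA mulmxE c' -mulmxE -mulmxA h mulmx0.
Qed.

Lemma nil_mulC X B z : GRing.comm B X -> nil X z -> nil (B * X) z.
Proof.
move=> c [N h]; exists N; rewrite exprMn_comm // -mulmxE -mulmxA h mulmx0 //.
Qed.

Lemma nil_opp X z : nil X z -> nil (- X) z.
Proof.
move=> [N h]; exists N; rewrite exprNn -mulmxE -mulmxA h mulmx0 //.
Qed.

Lemma nil_add X W z : GRing.comm X W -> nil X z -> nil W z -> nil (X + W) z.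
Proof.
move=> c [N hX] [N' hW]; exists (N + N')%N.
rewrite exprDn_comm // mulmx_suml big1 // => i _.
have hT T m : T *m z = 0 -> (T *+ m) *m z = 0.
  by move=> hz; elim: m => [|m IH]; rewrite ?mulr0n ?mul0mx // mulrS mulmxDl IH hz addr0.
apply: hT; case: (leqP N' i) => hi.
  by rewrite -(subnK hi) exprD mulrA -mulmxE -mulmxA hW mulmx0.
have hi' : (N <= N + N' - i)%N by rewrite -addnBA ?leq_addr // ltnW.
rewrite -(subnK hi') exprD.
have c' : GRing.comm (X ^+ N) (W ^+ i) by apply/commrX/commr_sym/commrX/commr_sym.
by rewrite -mulrA c' mulrA -mulmxE -mulmxA hX mulmx0.
Qed.
End Nil.

Section Diag.
Variable n : nat.
Lemma is_diag_id (b : lseq n) : is_diagram b b (id_diag n).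
Proof. apply/forallP => -[j|j]; by rewrite /id_diag !ffunE /= !eqxx. Qed.

Lemma is_diag_swap (k k' : 'I_n) (b : lseq n) : b k = b k' -> is_diagram b b (swap_diag k k').
Proof.
move=> hb; apply/forallP => -[j|j]; rewrite /swap_diag !ffunE /= tpermK !eqxx /=;
by case: tpermP => [->|->|] //; rewrite hb.
Qed.
End Diag.


Section Phi.
Variable n' : nat.
Local Notation d := n'.+1.
Variables (Z Z' : 'M[C]_d) (hc : GRing.comm Z Z').

Lemma cfu : commr_rmorph (horner_mx Z') Z.
Proof. by move=> x; apply: comm_mx_horner. Qed.

Definition Phi := horner_morph cfu.
HB.instance Definition _ := GRing.RMorphism.on Phi.

Lemma PhiX : Phi 'X = Z. Proof. exact: horner_morphX. Qed.
Lemma PhiY : Phi ('X%:P) = Z'. Proof. by rewrite /Phi horner_morphC /= horner_mx_X. Qed.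
Lemma PhiC c : Phi (c%:P%:P) = c%:M. Proof. by by rewrite /Phi horner_morphC /= horner_mx_C. Qed.

Lemma Phi_comm p q : GRing.comm (Phi p) (Phi q).
Proof. by rewrite /GRing.comm -!rmorphM mulrC. Qed.

Lemma Phi_commB B p : GRing.comm B Z -> GRing.comm B Z' -> GRing.comm B (Phi p).
Proof.
move=> h1 h2; rewrite /Phi /horner_morph; apply: commr_horner => // i.
rewrite coef_map /=; exact: (comm_horner_mx _ (commr_sym h2)).
Qed.

End Phi.

Section Main.
Variables (r t : nat) (omega : nat -> C) (n' : nat).
Local Notation d := n'.+1.
Local Notation n := (r + t).
Variable M : VBr_module r t omega d.
Variables (k k' : 'I_n) (hk : val k' = (val k).+1) (a : lseq n) (ha : is_Seq r a).
Local Notation O := (one_a (rho M) a).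
Local Notation S := (s_ (rho M) k k').
Local Notation s1a := (s1 (rho M) k k' a).

Lemma S_v (hab : a k = a k') (w : 'cV[C]_d) : S *m (O *m w) = s1a *m (O *m w).
Proof.
rewrite /s_ mulmx_suml (bigD1 a) // big1 /=; [by rewrite addr0 | move=> b /andP[hb nba]].
rewrite /s1; case: ifP => hbk; last by rewrite mul0mx.
rewrite mulmxA /one_a (@rho_mul0 _ _ _ _ M a a b b) ?mul0mx //.
- exact: is_diag_id.
- exact: is_diag_swap (eqP hbk).
- by rewrite eq_sym.
Qed.

Lemma s1_in (hab : a k = a k') (x : 'cV[C]_d) : s1a *m x = O *m (s1a *m x).
Proof.
rewrite -{1}[s1a *m x]mul1mx -(rho_unit M) mulmx_suml (bigD1 a) // big1 /=; [by rewrite addr0 | move=> b /andP[hb nba]].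
rewrite /s1 hab eqxx mulmxA /one_a (@rho_mul0 _ _ _ _ M a a b b) ?mul0mx //.
- exact: is_diag_swap.
- exact: is_diag_id.
- by rewrite eq_sym.
Qed.

Lemma Y_oneC j : GRing.comm O (Y M j).
Proof. by rewrite /GRing.comm -!mulmxE (Y_one M j ha). Qed.

Local Notation Z := (Y M k).
Local Notation Z' := (Y M k').
Definition hZZ : GRing.comm Z Z' := Y_comm M k k'.
Local Notation Ph := (Phi hZZ).

Definition V (y : 'cV[C]_d) := exists w, y = O *m w.

Lemma V_Phi p y : V y -> V (Ph p *m y).
Proof.
case=> w ->; exists (Ph p *m w).
by rewrite !mulmxA !mulmxE (Phi_commB hZZ p (Y_oneC k) (Y_oneC k')).
Qed.

Lemma R12 (hab : a k = a k') (w : 'cV[C]_d) :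
  S *m (Z *m (O *m w)) = Z' *m (S *m (O *m w)) - O *m w /\
  S *m (Z' *m (O *m w)) = Z *m (S *m (O *m w)) + O *m w.
Proof.
have [h1 h2] := Y_s M hk ha hab.
split.
- have := congr1 (mulmx^~ w) h1; rewrite /= mulmxBl -!mulmxA mulNmx => e.
  by rewrite -e addrC subrK.
- have := congr1 (mulmx^~ w) h2; rewrite /= mulmxBl -!mulmxA => e.
  by apply/eqP; rewrite addrC -subr_eq e.
Qed.

Lemma CS_E (hab : a k = a k') c y : V y ->
  S *m (Ph ('X + 'X%:P - c%:P%:P) *m y) = Ph ('X + 'X%:P - c%:P%:P) *m (S *m y).
Proof.
case=> w ->; have [e1 e2] := R12 hab w.
rewrite rmorphB rmorphD /= PhiX PhiY PhiC.
rewrite !mulmxBl !mulmxDl !mulmxBr !mulmxDr e1 e2 !mul_scalar_mx -scalemxAr.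
by rewrite addrACA addNr addr0 [Z' *m _ + _]addrC.
Qed.

Lemma CS_P (hab : a k = a k') c y : V y ->
  S *m (Ph ('X * 'X%:P - c%:P%:P) *m y) = Ph ('X * 'X%:P - c%:P%:P) *m (S *m y).
Proof.
case=> w ->; have [e1 e2] := R12 hab w.
have e3 : Z' *m (O *m w) = O *m (Z' *m w) by rewrite mulmxA (Y_one M k' ha) -mulmxA.
have [e4 _] := R12 hab (Z' *m w).
rewrite rmorphB rmorphM /= PhiX PhiY PhiC -mulmxE.
rewrite !mulmxBl !mulmxBr !mul_scalar_mx -scalemxAr -!mulmxA e3 e4 -e3 e2.
have hzz : Z' *m Z = Z *m Z' := esym hZZ.
by rewrite mulmxDr addrK !mulmxA hzz.
Qed.

Lemma powcomm (T : 'M[C]_d) : (forall y, V y -> V (T *m y)) ->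
  (forall y, V y -> S *m (T *m y) = T *m (S *m y)) ->
  forall m y, V y -> S *m (T ^+ m *m y) = T ^+ m *m (S *m y).
Proof.
move=> hV hS; elim=> [|m IH] y hy; first by rewrite expr0 !mul1mx.
by rewrite !powmulmx (IH _ (hV _ hy)) (hS _ hy).
Qed.

Lemma nil_all (F : 'I_n -> 'M[C]_d) (z : 'cV[C]_d) :
  (forall j, nil (F j) z) -> exists N, forall j, F j ^+ N *m z = 0.
Proof.
move=> h; have [f hf] := fin_all_exists h.
exists (\max_j f j) => j; apply: nil_mono (hf j) _; exact: leq_bigmax.
Qed.

Lemma in_wt_of (ii : 'I_n -> C) u : V u ->
  (forall j, nil (Y M j - (ii j)%:M) u) -> in_wt M a ii u.
Proof. by move=> hV h; split => //; apply: nil_all. Qed.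

Lemma hZc c : Z - c%:M = Ph ('X - c%:P%:P).
Proof. by rewrite rmorphB /= PhiX PhiC. Qed.
Lemma hZc' c : Z' - c%:M = Ph ('X%:P - c%:P%:P).
Proof. by rewrite rmorphB /= PhiY PhiC. Qed.

Lemma commYc j c : GRing.comm Z (Y M j - c%:M) /\ GRing.comm Z' (Y M j - c%:M).
Proof.
split; apply: commrB; rewrite /GRing.comm -?mulmxE ?scalar_mxC //; exact: Y_comm.
Qed.

Lemma nil_Yj j c p z : nil (Y M j - c%:M) z -> nil (Y M j - c%:M) (Ph p *m z).
Proof.
move=> h; apply: nil_comm h; have [h1 h2] := commYc j c.
exact: (Phi_commB hZZ p (commr_sym h1) (commr_sym h2)).
Qed.

Lemma kk : k != k'.
Proof. by apply/eqP => e; move: hk; rewrite e; apply: n_Sn. Qed.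
Lemma main_case (hab : a k = a k') (i : 'I_n -> C) (v : 'cV[C]_d) :
  in_wt M a i v -> exists u w : 'cV[C]_d,
    [/\ in_wt M a i u, in_wt M a (sk_vec k k' i) w & s1a *m v = u + w].
Proof.
case=> [[w0 hv0] [N hN]].
have PC := Phi_comm hZZ.
have Vv : V v by exists w0.
have nvk : nil (Ph ('X - (i k)%:P%:P)) v by exists N; rewrite -hZc hN.
have nvk' : nil (Ph ('X%:P - (i k')%:P%:P)) v by exists N; rewrite -hZc' hN.
set PE : {poly {poly C}} := 'X + 'X%:P - ((i k) + (i k'))%:P%:P.
have nvE : nil (Ph PE) v.
  have -> : PE = ('X - (i k)%:P%:P) + ('X%:P - (i k')%:P%:P) by rewrite /PE; ring.
  rewrite rmorphD; exact: (nil_add (PC _ _) nvk nvk').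
set PP : {poly {poly C}} := 'X * 'X%:P - ((i k) * (i k'))%:P%:P.
have nvP : nil (Ph PP) v.
  have -> : PP = 'X%:P * ('X - (i k)%:P%:P) + (i k)%:P%:P * ('X%:P - (i k')%:P%:P)
    by rewrite /PP; ring.
  rewrite rmorphD; apply: (nil_add (PC _ _)).
  - rewrite rmorphM; exact: (nil_mulC (PC _ _) nvk).
  - rewrite rmorphM; exact: (nil_mulC (PC _ _) nvk').
set z := S *m v.
have hz : s1a *m v = z by rewrite /z hv0 S_v.
have Vz : V z by exists (s1a *m v); rewrite -hz; exact: s1_in.
have nil_S T : (forall y, V y -> S *m (T *m y) = T *m (S *m y)) ->
    (forall y, V y -> V (T *m y)) -> nil T v -> nil T z.
  move=> hS hV [m hm]; exists m; rewrite /z -(powcomm hV hS m Vv) hm mulmx0 //.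
have nzE : nil (Ph PE) z.
  apply: nil_S nvE => y hy; [exact: CS_E | exact: V_Phi].
have nzP : nil (Ph PP) z.
  apply: nil_S nvP => y hy; [exact: CS_P | exact: V_Phi].
set Q : {poly {poly C}} := ('X - (i k)%:P%:P) * ('X - (i k')%:P%:P).
have nzQ : nil (Ph Q) z.
  have -> : Q = 'X * PE - PP by rewrite /Q /PE /PP; ring.
  rewrite rmorphB; apply: (nil_add (commrN (PC _ _))).
  - rewrite rmorphM; exact: (nil_mulC (PC _ _) nzE).
  - exact: nil_opp.
have nzo j : j != k -> j != k' -> nil (Y M j - (i j)%:M) z.
  move=> h1 h2; exists N; rewrite /z.
  have [hf _ _ _] := Y_far M hk h1 h2.
  have c : GRing.comm S (Y M j - (i j)%:M).
    by apply: commrB; rewrite /GRing.comm -?mulmxE ?scalar_mxC // hf.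
  have c' := commrX N c.
  by rewrite mulmxA mulmxE -c' -mulmxE -mulmxA hN mulmx0.
have hkk := kk.
have nil0 ii : in_wt M a ii 0.
  by split; [exists 0; rewrite mulmx0 | exists 0%N => j; rewrite mulmx0].
have ePE : 'X%:P - (i k')%:P%:P = PE - ('X - (i k)%:P%:P) :> {poly {poly C}}.
  by rewrite /PE; ring.
have ePE' : 'X%:P - (i k)%:P%:P = PE - ('X - (i k')%:P%:P) :> {poly {poly C}}.
  by rewrite /PE; ring.
have [heq|hne] := eqVneq (i k) (i k').
  exists z, 0; split; last by rewrite hz addr0.
  - apply: (in_wt_of Vz) => j.
    have nQ2 : nil (Ph ('X - (i k)%:P%:P)) z.
      case: nzQ => m hm; exists (2 * m)%N.
      by rewrite exprM -rmorphXn expr2 {2}heq.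
    have [->|h1] := eqVneq j k; first by rewrite hZc.
    have [->|h2] := eqVneq j k'; last exact: nzo.
    rewrite hZc' ePE rmorphB; apply: (nil_add (commrN (PC _ _)) nzE).
    exact: nil_opp.
  - exact: nil0.
case: nzQ => m hm.
have hco : coprimep (('X - (i k)%:P) ^+ m) (('X - (i k')%:P) ^+ m).
  by apply/coprimep_expl/coprimep_expr/coprimep_XsubC2; rewrite subr_eq0 eq_sym.
have /Bezout_eq1_coprimepP [[u1 u2] /= hb] := hco.
have hb2 : u1^:P * ('X - (i k)%:P%:P) ^+ m + u2^:P * ('X - (i k')%:P%:P) ^+ m = 1.
  have := congr1 (map_poly polyC) hb.
  by rewrite rmorphD !rmorphM !rmorphXn !rmorphB /= map_polyX !map_polyC rmorph1.
have hb' : Ph (u1^:P * ('X - (i k)%:P%:P) ^+ m) + Ph (u2^:P * ('X - (i k')%:P%:P) ^+ m) = 1.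
  by rewrite -rmorphD hb2 rmorph1.
set u := Ph (u2^:P * ('X - (i k')%:P%:P) ^+ m) *m z.
set w := Ph (u1^:P * ('X - (i k)%:P%:P) ^+ m) *m z.
have ezuw : z = u + w by rewrite /u /w -mulmxDl addrC hb' mul1mx.
have nu : nil (Ph ('X - (i k)%:P%:P)) u.
  exists m; rewrite /u mulmxA -rmorphXn mulmxE -rmorphM.
  have -> : ('X - (i k)%:P%:P) ^+ m * (u2^:P * ('X - (i k')%:P%:P) ^+ m) = u2^:P * Q ^+ m.
    by rewrite /Q exprMn; ring.
  by rewrite rmorphM rmorphXn -mulmxE -mulmxA hm mulmx0.
have nw : nil (Ph ('X - (i k')%:P%:P)) w.
  exists m; rewrite /w mulmxA -rmorphXn mulmxE -rmorphM.
  have -> : ('X - (i k')%:P%:P) ^+ m * (u1^:P * ('X - (i k)%:P%:P) ^+ m) = u1^:P * Q ^+ m.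
    by rewrite /Q exprMn; ring.
  by rewrite rmorphM rmorphXn -mulmxE -mulmxA hm mulmx0.
have nzE' p : nil (Ph PE) (Ph p *m z) by apply: nil_comm nzE; exact: PC.
exists u, w; split; last by rewrite hz.
- apply: in_wt_of; first exact: V_Phi.
  move=> j; have [->|h1] := eqVneq j k.
    rewrite hZc; exact: nu.
  have [->|h2] := eqVneq j k'; last exact: (nil_Yj _ (nzo j h1 h2)).
  rewrite hZc' ePE rmorphB; apply: (nil_add (commrN (PC _ _)) (nzE' _)).
  exact: (nil_opp nu).
- apply: in_wt_of; first exact: V_Phi.
  move=> j; rewrite /sk_vec.
  have [->|h1] := eqVneq j k; first by rewrite tpermL hZc; exact: nw.
  have [->|h2] := eqVneq j k'.
    rewrite tpermR hZc' ePE' rmorphB; apply: (nil_add (commrN (PC _ _)) (nzE' _)).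
    exact: (nil_opp nw).
  rewrite tpermD; [exact: (nil_Yj _ (nzo j h1 h2)) | by rewrite eq_sym | by rewrite eq_sym].
Qed.
End Main.

Lemma in_wt0 r t omega d (M : VBr_module r t omega d) a (ii : 'I_(r + t) -> C) :
  in_wt M a ii 0.
Proof. by split; [exists 0; rewrite mulmx0 | exists 0%N => j; rewrite mulmx0]. Qed.

Theorem lemma3p1 (r t : nat) (omega : nat -> C) (d : nat)
  (M : VBr_module r t omega d)
  (k k' : 'I_(r + t)) (hk : val k' = (val k).+1)
  (a : lseq (r + t)) (ha : is_Seq r a) (i : 'I_(r + t) -> C) :
  forall v : 'cV[C]_d, in_wt M a i v ->
    exists u w : 'cV[C]_d,
      [/\ in_wt M a i u, in_wt M a (sk_vec k k' i) w &
          s1 (rho M) k k' a *m v = u + w].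
Proof.
move=> v hv; have [hab|hab] := eqVneq (a k) (a k').
  case: d M v hv => [|n'] M v hv.
    exists 0, 0; split; try exact: in_wt0.
    by rewrite [v]flatmx0 mulmx0 addr0.
  exact: main_case.
exists 0, 0; split; try exact: in_wt0.
by rewrite /s1 (negPf hab) mul0mx addr0.
Qed.
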